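(* Assume $\sum_{i=1}^M b_i<1$ and let $\mathbf r^\star=\mathbf r^\star(\epsilon)$ be the energy-scarce solution defined in the context. Then, with $M$, $(w_i)$, $(b_i)$ fixed, as $\epsilon\to0^+$, $$\big|\bar\Delta(\mathbf r^\star)-\bar\Delta_{\mathrm{opt}}(\epsilon)\big|\le \epsilon\, C_2+o(\epsilon),\qquad C_2=\sum_{l=1}^M\frac{w_l}{b_l\big(1-\sum_{i=1}^M b_i\big)}\Big(3\sum_{i=1}^M b_i-\min_j b_j\Big).$$
   Context: Fix an integer $M\ge1$, weights $w_1,\dots,w_M>0$, constants $b_1,\dots,b_M>0$, and $\epsilon>0$. For $\mathbf r\in(0,\infty)^M$ write $S(\mathbf r)=\sum_{i=1}^M r_i$ and define $$\bar\Delta(\mathbf r)=\sum_{l=1}^M \frac{w_l e^{-r_l\epsilon}}{r_l}\, e^{\epsilon S(\mathbf r)}\big(1+S(\mathbf r)\big)+\sum_{l=1}^M w_l,\qquad \sigma_l(\mathbf r)=\frac{(1-e^{-r_l\epsilon})S(\mathbf r)+r_le^{-r_l\epsilon}}{S(\mathbf r)+1}.$$ Problem 1: minimize $\bar\Delta(\mathbf r)$ over $\mathbf r\in(0,\infty)^M$ subject to $\sigma_l(\mathbf r)\le b_l$ for all $l$; its optimal (infimum) value is $\bar\Delta_{\mathrm{opt}}(\epsilon)$. Energy-scarce solution (when $B:=\sum_i b_i<1$): for each $l$ let $$c_l=\frac{2b_l(1-B)^2}{b_l(1-B)^2+\sqrt{b_l^2(1-B)^4+4b_l^2(1-B)^2(B-b_l)\epsilon}},$$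 let $x^\star=\frac{\min_l c_l}{1-B}$, $\beta^\star=\sum_{i=1}^M \frac{1}{\sqrt{w_i}}$, and set $r^\star_l=\min\{b_l,\beta^\star\sqrt{w_l}\}\,x^\star$ (which equals $b_l x^\star$). *)

(* Defs.v *)
From Stdlib Require Import Reals.
Open Scope R_scope.

(* Indices i = 1..M of the paper are represented as i = 0..M-1. *)

Fixpoint fsum (n : nat) (f : nat -> R) : R :=
  match n with
  | O => 0
  | S k => fsum k f + f k
  end.

(* fmin n f = min_{i<n} f i, for n >= 1 (value 0 for n = 0, never used) *)
Fixpoint fmin (n : nat) (f : nat -> R) : R :=
  match n with
  | O => 0
  | S k => match k with
           | O => f O
           | _ => Rmin (fmin k f) (f k)
           end
  end.

Definition Ssum (M : nat) (r : nat -> R) : R := fsum M r.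

Definition Delta_bar (M : nat) (w : nat -> R) (eps : R) (r : nat -> R) : R :=
  fsum M (fun l => w l * exp (- r l * eps) / r l * exp (eps * Ssum M r) * (1 + Ssum M r))
  + fsum M w.

Definition sigma (M : nat) (eps : R) (r : nat -> R) (l : nat) : R :=
  ((1 - exp (- r l * eps)) * Ssum M r + r l * exp (- r l * eps)) / (Ssum M r + 1).

Definition feasible (M : nat) (b : nat -> R) (eps : R) (r : nat -> R) : Prop :=
  (forall i, (i < M)%nat -> 0 < r i) /\
  (forall l, (l < M)%nat -> sigma M eps r l <= b l).

Definition is_inf_value (P : (nat -> R) -> Prop) (f : (nat -> R) -> R) (m : R) : Prop :=
  (forall r, P r -> m <= f r) /\
  (forall y, (forall r, P r -> y <= f r) -> y <= m).

Definition Btot (M : nat) (b : nat -> R) : R := fsum M b.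

Definition c_coef (M : nat) (b : nat -> R) (eps : R) (l : nat) : R :=
  let B := Btot M b in
  2 * b l * (1 - B) ^ 2 /
  (b l * (1 - B) ^ 2 +
   sqrt (b l ^ 2 * (1 - B) ^ 4 + 4 * b l ^ 2 * (1 - B) ^ 2 * (B - b l) * eps)).

Definition x_star (M : nat) (b : nat -> R) (eps : R) : R :=
  fmin M (c_coef M b eps) / (1 - Btot M b).

Definition beta_star (M : nat) (w : nat -> R) : R :=
  fsum M (fun i => 1 / sqrt (w i)).

Definition r_star (M : nat) (w b : nat -> R) (eps : R) (l : nat) : R :=
  Rmin (b l) (beta_star M w * sqrt (w l)) * x_star M b eps.

Definition C2 (M : nat) (w b : nat -> R) : R :=
  fsum M (fun l => w l / (b l * (1 - Btot M b)) * (3 * Btot M b - fmin M b)).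

(* Main.v *)
Require Import Defs.
From Stdlib Require Import Reals Lra Lia Psatz.
Open Scope R_scope.

Lemma fsum_ext n f g : (forall i, (i < n)%nat -> f i = g i) -> fsum n f = fsum n g.
Proof. induction n; simpl; intros H; [reflexivity|].
 rewrite IHn by (intros; apply H; lia). rewrite H by lia. reflexivity. Qed.

Lemma fsum_le n f g : (forall i, (i < n)%nat -> f i <= g i) -> fsum n f <= fsum n g.
Proof. induction n; simpl; intros H; [lra|].
 assert (fsum n f <= fsum n g) by (apply IHn; intros; apply H; lia).
 assert (f n <= g n) by (apply H; lia). lra. Qed.

Lemma fsum_scal n f c : fsum n (fun i => f i * c) = fsum n f * c.
Proof. induction n; simpl; [ring|]. rewrite IHn; ring. Qed.

Lemma fsum_nonneg n f : (forall i, (i < n)%nat -> 0 <= f i) -> 0 <= fsum n f.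
Proof. intros H. apply Rle_trans with (fsum n (fun _ => 0)).
 - clear H; induction n; simpl; lra.
 - apply fsum_le; auto. Qed.

Lemma fsum_ge_term n f k : (forall i, (i < n)%nat -> 0 <= f i) -> (k < n)%nat -> f k <= fsum n f.
Proof. induction n; intros H Hk; [lia|]. simpl.
 destruct (Nat.eq_dec k n) as [->|Hne].
 - assert (0 <= fsum n f) by (apply fsum_nonneg; intros; apply H; lia). lra.
 - assert (f k <= fsum n f) by (apply IHn; [intros; apply H; lia| lia]).
   assert (0 <= f n) by (apply H; lia). lra. Qed.

Lemma fsum_pos n f : (1 <= n)%nat -> (forall i, (i < n)%nat -> 0 < f i) -> 0 < fsum n f.
Proof. intros Hn H. assert (f 0%nat <= fsum n f) by (apply fsum_ge_term; [intros; left; apply H; lia|lia]).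
 assert (0 < f 0%nat) by (apply H; lia). lra. Qed.

Lemma fmin_le n f k : (k < n)%nat -> fmin n f <= f k.
Proof. induction n; intros Hk; [lia|]. simpl. destruct n.
 - assert (k = 0%nat) by lia. subst; lra.
 - destruct (Nat.eq_dec k (S n)) as [->|Hne].
   + apply Rmin_r.
   + eapply Rle_trans; [apply Rmin_l|]. apply IHn; lia. Qed.

Lemma fmin_att n f : (1 <= n)%nat -> exists k, (k < n)%nat /\ fmin n f = f k.
Proof. induction n; intros Hn; [lia|]. simpl. destruct n.
 - exists 0%nat; split; [lia|reflexivity].
 - destruct (IHn ltac:(lia)) as [k [Hk Hf]].
   unfold Rmin; destruct (Rle_dec (fmin (S n) f) (f (S n))).
   + exists k; split; [lia|exact Hf].
   + exists (S n); split; [lia|reflexivity]. Qed.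

Lemma exp_le a b : a <= b -> exp a <= exp b.
Proof. intros [H|H]; [left; apply exp_increasing; auto| subst; lra]. Qed.

Lemma c_eq M b eps l : 0 < b l -> Btot M b < 1 ->
  c_coef M b eps l = 2 * (1 - Btot M b) /
   ((1 - Btot M b) + sqrt ((1 - Btot M b)^2 + 4 * (Btot M b - b l) * eps)).
Proof. intros Hb HB. unfold c_coef. set (B := Btot M b). set (be := 1 - B).
 assert (Hbe : 0 < be) by (unfold be, B in *; lra).
 replace (b l ^ 2 * be ^ 4 + 4 * b l ^ 2 * be ^ 2 * (B - b l) * eps)
   with ((b l * be) * (b l * be) * (be ^ 2 + 4 * (B - b l) * eps)) by ring.
 rewrite sqrt_mult_alt by nra. rewrite sqrt_square by nra.
 set (s := sqrt _).
 assert (0 <= s) by apply sqrt_pos.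
 field. split; [lra|]. assert (0 < b l * be) by nra. assert (0 < b l * be * (be + s)) by nra. nra. Qed.

Lemma xfacts M b eps : (1 <= M)%nat -> (forall i, (i < M)%nat -> 0 < b i) ->
  Btot M b < 1 -> 0 < eps ->
  0 < x_star M b eps /\ x_star M b eps <= 1 / (1 - Btot M b) /\
  1 / x_star M b eps <= (1 - Btot M b) + (Btot M b - fmin M b) * eps / (1 - Btot M b) /\
  (forall l, (l < M)%nat -> (Btot M b - b l) * eps * (x_star M b eps)^2
        + (1 - Btot M b) * x_star M b eps - 1 <= 0).
Proof. intros HM Hb HB He.
 set (B := Btot M b) in *. set (be := 1 - B).
 assert (Hbe : 0 < be) by (unfold be; lra).
 assert (Hd : forall l, (l < M)%nat -> 0 <= B - b l).
 { intros l Hl. assert (b l <= B) by (apply fsum_ge_term; [intros; left; apply Hb; lia| lia]). lra. }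
 assert (Hc : forall l, (l < M)%nat ->
   let s := sqrt (be^2 + 4 * (B - b l) * eps) in
   c_coef M b eps l = 2 * be / (be + s) /\ be <= s /\ s <= be + 2 * (B - b l) * eps / be
   /\ s * s = be^2 + 4 * (B - b l) * eps).
 { intros l Hl s. pose proof (Hd l Hl). split; [apply c_eq; auto|].
   assert (Hss : s * s = be^2 + 4 * (B - b l) * eps) by (apply sqrt_sqrt; nra).
   assert (0 <= s) by apply sqrt_pos.
   assert (0 <= (B - b l) * eps) by nra.
   split; [|split; [|exact Hss]].
   - nra.
   - assert (0 <= 2 * (B - b l) * eps / be) by (unfold Rdiv; apply Rmult_le_pos; [lra| left; apply Rinv_0_lt_compat; lra]).
     set (t := be + 2 * (B - b l) * eps / be).
     assert (t * t >= s * s).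
     { rewrite Hss. unfold t.
       replace ((be + 2 * (B - b l) * eps / be) * (be + 2 * (B - b l) * eps / be))
         with (be^2 + 4 * (B - b l) * eps + (2 * (B - b l) * eps / be)^2) by (field; lra).
       nra. }
     unfold t in *; nra. }
 destruct (fmin_att M (c_coef M b eps) HM) as [l0 [Hl0 Hmin]].
 destruct (Hc l0 Hl0) as [Hc0 [Hs1 [Hs2 Hs3]]].
 set (s0 := sqrt (be ^ 2 + 4 * (B - b l0) * eps)) in *.
 assert (Hx : x_star M b eps = 2 / (be + s0)).
 { unfold x_star. fold B. rewrite Hmin, Hc0. fold be. field. split; lra. }
 rewrite Hx.
 assert (Hbm : fmin M b <= b l0) by (apply fmin_le; auto).
 split; [apply Rdiv_lt_0_compat; lra|].
 split; [apply Rmult_le_reg_r with (be * (be + s0)); [nra|];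
   replace (2 / (be + s0) * (be * (be + s0))) with (2 * be) by (field; lra);
   replace (1 / be * (be * (be + s0))) with (be + s0) by (field; lra); lra|].
 split.
 - replace (1 / (2 / (be + s0))) with ((be + s0) / 2) by (field; lra).
   assert ((B - b l0) * eps / be <= (B - fmin M b) * eps / be).
   { apply Rmult_le_compat_r; [left; apply Rinv_0_lt_compat; lra|]. nra. }
   replace (2 * (B - b l0) * eps / be) with (2 * ((B - b l0) * eps / be)) in Hs2 by (field; lra).
   lra.
 - intros l Hl. destruct (Hc l Hl) as [Hcl [Hsl1 [Hsl2 Hsl3]]].
   set (sl := sqrt (be ^ 2 + 4 * (B - b l) * eps)) in *.
   assert (Hle : c_coef M b eps l0 <= c_coef M b eps l) by (rewrite <- Hmin; apply fmin_le; auto).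
   rewrite Hc0, Hcl in Hle.
   set (y := 2 / (be + sl)).
   set (x := 2 / (be + s0)).
   assert (Hxy : x <= y).
   { unfold x, y. apply Rmult_le_reg_r with be; [lra|].
     replace (2 / (be + s0) * be) with (2 * be / (be + s0)) by (field; lra).
     replace (2 / (be + sl) * be) with (2 * be / (be + sl)) by (field; lra). exact Hle. }
   assert (Hx0 : 0 < x) by (apply Rdiv_lt_0_compat; lra).
   assert (Hq : (B - b l) * eps * y ^ 2 + be * y - 1 = 0).
   { unfold y. assert (Hd' : (B - b l) * eps = (sl * sl - be^2)/4) by lra.
     rewrite Hd'. field. lra. }
   pose proof (Hd l Hl).
   assert (0 <= (B - b l) * eps) by nra.
   assert ((B - b l) * eps * x ^ 2 <= (B - b l) * eps * y ^ 2).
   { apply Rmult_le_compat_l; auto. simpl. nra. }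
   nra.
Qed.

Lemma term_lower w b r S E1 E2 a eps :
  0 < w -> 0 < b -> 0 < r -> 0 < 1 + S -> 1 <= E1 * E2 -> r * E1 <= b * (1 + S) ->
  1 - a * eps <= E1 -> 0 < E1 ->
  w / b * (1 - a * eps) <= w * E1 / r * E2 * (1 + S).
Proof. intros Hw Hb Hr HS H12 Hrb Ha HE1.
 assert (Hu : E1 / b <= (1 + S) / r).
 { apply Rmult_le_reg_r with (b * r); [nra|].
   replace (E1 / b * (b * r)) with (r * E1) by (field; lra).
   replace ((1 + S) / r * (b * r)) with (b * (1 + S)) by (field; lra). lra. }
 assert (Hv : (1 - a * eps) / b <= E1 / b).
 { unfold Rdiv. apply Rmult_le_compat_r; [left; apply Rinv_0_lt_compat; lra| lra]. }
 assert (0 < (1 + S) / r) by (apply Rdiv_lt_0_compat; lra).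
 replace (w * E1 / r * E2 * (1 + S)) with (w * ((1 + S) / r) * (E1 * E2)) by (field; lra).
 replace (w / b * (1 - a * eps)) with (w * ((1 - a * eps) / b)) by (field; lra).
 assert (w * ((1 - a * eps) / b) <= w * ((1 + S) / r)) by (apply Rmult_le_compat_l; lra).
 assert (0 < w * ((1 + S) / r)) by (apply Rmult_lt_0_compat; lra).
 nra. Qed.

Lemma lower M w b eps r : (1 <= M)%nat -> (forall i, (i < M)%nat -> 0 < w i) ->
  (forall i, (i < M)%nat -> 0 < b i) -> Btot M b < 1 -> 0 < eps -> feasible M b eps r ->
  fsum M w + (1 - Btot M b / (1 - Btot M b) * eps) * fsum M (fun l => w l / b l)
   <= Delta_bar M w eps r.
Proof. intros HM Hw Hb HB He [Hr Hs].
 set (B := Btot M b) in *. set (be := 1 - B).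
 assert (Hbe : 0 < be) by (unfold be; lra).
 unfold Delta_bar. set (S := Ssum M r).
 assert (HrS : forall l, (l < M)%nat -> r l <= S).
 { intros l Hl. apply fsum_ge_term; auto. intros; left; auto. }
 assert (HS0 : 0 < S) by (apply fsum_pos; auto).
 assert (Hnum : forall l, (l < M)%nat ->
   (1 - exp (- r l * eps)) * S + r l * exp (- r l * eps) <= b l * (S + 1)).
 { intros l Hl. pose proof (Hs l Hl) as H. unfold Defs.sigma in H. fold S in H.
   set (n := (1 - exp (- r l * eps)) * S + r l * exp (- r l * eps)) in *.
   replace n with (n / (S + 1) * (S + 1)) by (field; lra).
   apply Rmult_le_compat_r; lra. }
 assert (HE : forall l, (l < M)%nat -> exp (- r l * eps) <= 1 /\ 0 < exp (- r l * eps)).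
 { intros l Hl. split; [|apply exp_pos]. rewrite <- exp_0. apply exp_le.
   pose proof (Hr l Hl). nra. }
 assert (Hrl : forall l, (l < M)%nat -> r l <= b l * (S + 1)).
 { intros l Hl. pose proof (Hnum l Hl). pose proof (HE l Hl). pose proof (HrS l Hl).
   set (E := exp (- r l * eps)) in *. nra. }
 assert (HSB : S <= B * (S + 1)).
 { apply Rle_trans with (fsum M (fun l => b l * (S + 1))).
   - unfold S at 1, Ssum. apply fsum_le; auto.
   - rewrite fsum_scal. unfold B, Btot. lra. }
 assert (HSa : S <= B / be).
 { apply Rmult_le_reg_r with be; [lra|]. replace (B / be * be) with B by (field; lra).
   unfold be; nra. }
 rewrite (Rplus_comm (fsum M w)). apply Rplus_le_compat_r. rewrite Rmult_comm. rewrite <- fsum_scal.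
 apply fsum_le. intros l Hl.
 pose proof (HE l Hl). pose proof (Hnum l Hl). pose proof (HrS l Hl). pose proof (Hr l Hl).
 apply term_lower; auto; try lra.
 - rewrite <- exp_plus. rewrite <- exp_0. apply exp_le. nra.
 - set (E := exp (- r l * eps)) in *. assert (0 <= (1 - E) * S) by nra. lra.
 - pose proof (exp_ineq1_le (- r l * eps)).
   assert (r l * eps <= B / be * eps) by nra. lra.
Qed.

Lemma rstar_eq M w b eps l : (forall i, (i < M)%nat -> 0 < w i) ->
  (forall i, (i < M)%nat -> 0 < b i) -> Btot M b < 1 -> (l < M)%nat ->
  r_star M w b eps l = b l * x_star M b eps.
Proof. intros Hw Hb HB Hl. unfold r_star. f_equal. apply Rmin_left.
 assert (Hs : 0 < sqrt (w l)) by (apply sqrt_lt_R0; auto).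
 assert (1 / sqrt (w l) <= beta_star M w).
 { unfold beta_star. apply (fsum_ge_term M (fun i => 1 / sqrt (w i))); auto.
   intros i Hi. left. apply Rdiv_lt_0_compat; [lra|]. apply sqrt_lt_R0; auto. }
 assert (1 <= beta_star M w * sqrt (w l)).
 { replace 1 with (1 / sqrt (w l) * sqrt (w l)) by (field; lra).
   apply Rmult_le_compat_r; lra. }
 assert (b l <= Btot M b) by (apply fsum_ge_term; auto; intros; left; auto).
 lra. Qed.

Lemma Srstar M w b eps : (forall i, (i < M)%nat -> 0 < w i) ->
  (forall i, (i < M)%nat -> 0 < b i) -> Btot M b < 1 ->
  Ssum M (r_star M w b eps) = Btot M b * x_star M b eps.
Proof. intros Hw Hb HB. unfold Ssum, Btot. rewrite <- fsum_scal. apply fsum_ext.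
 intros; apply rstar_eq; auto. Qed.

Lemma rstar_feas M w b eps : (1 <= M)%nat -> (forall i, (i < M)%nat -> 0 < w i) ->
  (forall i, (i < M)%nat -> 0 < b i) -> Btot M b < 1 -> 0 < eps ->
  feasible M b eps (r_star M w b eps).
Proof. intros HM Hw Hb HB He.
 destruct (xfacts M b eps HM Hb HB He) as [Hx0 [Hx1 [Hx2 Hx3]]].
 set (x := x_star M b eps) in *. set (B := Btot M b) in *.
 split.
 - intros i Hi. rewrite rstar_eq by auto. apply Rmult_lt_0_compat; auto.
 - intros l Hl. unfold Defs.sigma. rewrite Srstar by auto. rewrite rstar_eq by auto.
   fold x B. pose proof (Hb l Hl). pose proof (Hx3 l Hl).
   assert (b l <= B) by (apply fsum_ge_term; auto; intros; left; auto).
   assert (HB0 : 0 < B) by (apply fsum_pos; auto).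
   set (t := b l * x * eps).
   assert (Ht : 0 <= t) by (unfold t; apply Rmult_le_pos; [apply Rmult_le_pos|]; lra).
   replace (- (b l * x) * eps) with (- t) by (unfold t; ring).
   pose proof (exp_ineq1_le (- t)).
   set (E := exp (- t)) in *.
   assert (Hn : (1 - E) * (B * x) + b l * x * E <= b l * (B * x + 1)).
   { assert ((B - b l) * x * E >= (B - b l) * x * (1 - t)).
     { apply Rle_ge. apply Rmult_le_compat_l; [|lra]. apply Rmult_le_pos; lra. }
     assert (b l * ((B - b l) * eps * x ^ 2 + (1 - B) * x - 1) <= 0).
     { assert (0 <= b l * (- ((B - b l) * eps * x ^ 2 + (1 - B) * x - 1))) by
         (apply Rmult_le_pos; lra). lra. }
     unfold t in *. nra. }
   assert (0 < B * x + 1) by nra.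
   apply Rmult_le_reg_r with (B * x + 1); auto.
   replace (((1 - E) * (B * x) + b l * x * E) / (B * x + 1) * (B * x + 1))
     with ((1 - E) * (B * x) + b l * x * E) by (field; lra). lra.
Qed.

Lemma term_upper w b x Bt E1 E2 G a K C eps :
  0 < w -> 0 < b -> 0 < x -> 0 < E1 * E2 -> E1 * E2 <= G -> G * (1 - a * eps) <= 1 -> 0 < 1 - a * eps ->
  0 < 1 / x + Bt -> 1 / x + Bt <= 1 + K * eps -> (1 + K * eps) <= (1 + C * eps) * (1 - a * eps) ->
  w * E1 / (b * x) * E2 * (1 + Bt * x) <= w / b * (1 + C * eps).
Proof. intros.
 replace (w * E1 / (b * x) * E2 * (1 + Bt * x)) with (w / b * ((E1 * E2) * (1 / x + Bt))) by (field; lra).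
 apply Rmult_le_compat_l; [left; apply Rdiv_lt_0_compat; lra|].
 set (E := E1 * E2) in *. set (P := 1 / x + Bt) in *.
 assert (E * P <= G * (1 + K * eps)) by nra.
 assert (G * (1 + K * eps) * (1 - a * eps) <= 1 + K * eps).
 { assert (0 <= 1 + K * eps) by lra. nra. }
 assert (G * (1 + K * eps) <= 1 + C * eps).
 { apply Rmult_le_reg_r with (1 - a * eps); auto. lra. }
 lra. Qed.

Theorem theorem2 (M : nat) (w b : nat -> R) (Dopt : R -> R) :
  (1 <= M)%nat ->
  (forall i, (i < M)%nat -> 0 < w i) ->
  (forall i, (i < M)%nat -> 0 < b i) ->
  Btot M b < 1 ->
  (forall eps, 0 < eps ->
     is_inf_value (feasible M b eps) (Delta_bar M w eps) (Dopt eps)) ->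
  forall eta, 0 < eta ->
  exists delta, 0 < delta /\
    forall eps, 0 < eps < delta ->
      Rabs (Delta_bar M w eps (r_star M w b eps) - Dopt eps)
        <= eps * C2 M w b + eta * eps.
Proof. intros HM Hw Hb HB Hinf eta Heta.
 set (B := Btot M b) in *. set (be := 1 - B).
 assert (Hbe : 0 < be) by (unfold be; lra).
 assert (HB0 : 0 < B) by (apply fsum_pos; auto).
 set (a := B / be). set (bm := fmin M b). set (K := (B - bm) / be).
 set (Q := fsum M (fun l => w l / b l)).
 assert (HQ : 0 < Q) by (apply fsum_pos; auto; intros; apply Rdiv_lt_0_compat; auto).
 assert (Ha : 0 <= a) by (left; apply Rdiv_lt_0_compat; lra).
 assert (Hbm : bm <= B).
 { apply Rle_trans with (b 0%nat). apply fmin_le; lia.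
   apply fsum_ge_term; [intros; left; auto| lia]. }
 assert (HK : 0 <= K) by (unfold K; unfold Rdiv; apply Rmult_le_pos; [lra| left; apply Rinv_0_lt_compat; lra]).
 set (et := eta / Q). assert (Het : 0 < et) by (apply Rdiv_lt_0_compat; lra).
 set (C := K + a + et).
 exists (Rmin (1 / (a + 1)) (et / (a * C + 1))). split.
 { apply Rmin_pos; apply Rdiv_lt_0_compat; unfold C in *; nra. }
 intros eps [He Hd].
 assert (Hd1 : eps < 1 / (a + 1)) by (eapply Rlt_le_trans; [exact Hd| apply Rmin_l]).
 assert (Hd2 : eps < et / (a * C + 1)) by (eapply Rlt_le_trans; [exact Hd| apply Rmin_r]).
 assert (HaC : 0 <= a * C) by (unfold C; nra).
 assert (Haeps : a * eps < 1).
 { assert (eps * (a + 1) < 1).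
   { apply Rmult_lt_reg_r with (/ (a + 1)). apply Rinv_0_lt_compat; lra.
     replace (eps * (a + 1) * / (a + 1)) with eps by (field; lra). unfold Rdiv in Hd1. lra. }
   nra. }
 assert (Hcond : 1 + K * eps <= (1 + C * eps) * (1 - a * eps)).
 { assert (eps * (a * C + 1) < et).
   { apply Rmult_lt_reg_r with (/ (a * C + 1)). apply Rinv_0_lt_compat; lra.
     replace (eps * (a * C + 1) * / (a * C + 1)) with eps by (field; lra). unfold Rdiv in Hd2. lra. }
   unfold C in *. nra. }
 destruct (Hinf eps He) as [Hlow Hup].
 pose proof (rstar_feas M w b eps HM Hw Hb HB He) as Hfeas.
 assert (Hle1 : Dopt eps <= Delta_bar M w eps (r_star M w b eps)) by (apply Hlow; auto).
 assert (Hle2 : fsum M w + (1 - a * eps) * Q <= Dopt eps).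
 { apply Hup. intros r Hr. replace (a * eps) with (B / (1 - B) * eps) by reflexivity.
   apply lower; auto. }
 destruct (xfacts M b eps HM Hb HB He) as [Hx0 [Hx1 [Hx2 Hx3]]].
 fold B be bm in Hx1, Hx2, Hx3.
 set (x := x_star M b eps) in *.
 assert (Hup2 : Delta_bar M w eps (r_star M w b eps) <= fsum M w + (1 + C * eps) * Q).
 { unfold Delta_bar. rewrite Srstar by auto. fold B x.
   apply Rle_trans with (fsum M (fun l => w l / b l * (1 + C * eps)) + fsum M w).
   2: { rewrite fsum_scal. fold Q. lra. }
   apply Rplus_le_compat_r. apply fsum_le. intros l Hl. rewrite rstar_eq by auto. fold x.
   pose proof (Hb l Hl). pose proof (Hw l Hl).
   assert (b l <= B) by (apply fsum_ge_term; auto; intros; left; auto).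
   assert (HG1 : exp (a * eps) * (1 - a * eps) <= 1).
   { pose proof (exp_ineq1_le (- (a * eps))).
     assert (exp (a * eps) * exp (- (a * eps)) = 1) by (rewrite <- exp_plus; replace (a * eps + - (a * eps)) with 0 by ring; apply exp_0).
     pose proof (exp_pos (a * eps)). nra. }
   apply (term_upper _ _ _ _ _ _ (exp (a * eps)) a K); auto; try lra.
   - pose proof (exp_pos (- (b l * x) * eps)). pose proof (exp_pos (eps * (B * x))). nra.
   - rewrite <- exp_plus. apply exp_le.
     assert (x * B <= 1 / be * B) by (apply Rmult_le_compat_r; lra).
     replace (1 / be * B) with a in H2 by (unfold a; field; lra).
     assert (0 <= x * b l) by nra. replace (- (b l * x) * eps + eps * (B * x)) with (eps * (x * B - x * b l)) by ring. rewrite (Rmult_comm a eps). apply Rmult_le_compat_l; lra.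
   - assert (0 < 1 / x) by (apply Rdiv_lt_0_compat; lra). lra.
   - replace (K * eps) with ((B - bm) * eps / be) by (unfold K; field; lra). unfold be in *. lra. }
 rewrite Rabs_pos_eq by lra.
 assert (HC2 : C2 M w b = Q * ((3 * B - bm) / be)).
 { unfold C2, Q. rewrite <- fsum_scal. apply fsum_ext. intros l Hl. fold B bm.
   pose proof (Hb l Hl). unfold be. field. split; lra. }
 rewrite HC2.
 assert (et * Q = eta) by (unfold et; field; lra).
 replace ((3 * B - bm) / be) with (K + 2 * a) by (unfold K, a; field; lra).
 unfold C in Hup2. nra.
Qed.
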